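(* Let $q$ be a prime power, $0<k<n$, and $X\in\mathcal{G}_q(n,k)$ with Ferrers diagram $\mathcal{F}_X$ and entries vector $x=(x_1,\dots,x_{|\mathcal{F}_X|})$ of its Ferrers tableaux form $\mathcal{F}(X)$. Then the number $\mathrm{Ind}_{\mathcal{F}}(X)$ of subspaces $Y\in\mathcal{G}_q(n,k)$ with $Y<X$ in the Ferrers-tableaux order is \[\mathrm{Ind}_{\mathcal{F}}(X)=\sum_{i=|\mathcal{F}_X|+1}^{k(n-k)}\alpha_iq^i+\mathrm{ind}_{|\mathcal{F}_X|}(\mathcal{F}_X)\,q^{|\mathcal{F}_X|}+\{x\},\] where $\alpha_i=p(k,n-k,i)$.
   Context: $\mathcal{G}_q(n,k)$ is the set of $k$-dimensional subspaces of $\mathbb{F}_q^n$; field elements are identified with $\mathbb{Z}_q=\{0,\dots,q-1\}$. For $X$, $\mathrm{RE}(X)$ is the unique $k\times n$ reduced row echelon matrix whose rows span $X$. The Ferrers tableaux form $\mathcal{F}(X)$ is obtained from $\mathrm{RE}(X)$ by deleting, in each row, the leading one and all entries to its left, and also deleting all columns containing a leading one; the remaining entries of each row are right-justified. The Ferrers diagram $\mathcal{F}_X$ is $\mathcal{F}(X)$ with entries replaced by dots; $|\mathcal{F}_X|$ is the number of dots. $\mathcal{F}_X$ is represented by $(\mathcal{F}_{n-k},\dots,\mathcal{F}_1)$, $\mathcal{F}_i$ the number of dots in the $i$-th column counted from the right. The entries vector $x=(x_1,\dots,x_{|\mathcal{F}_X|})$ lists the entries of $\mathcal{F}(X)$ numbered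 from right to left within a row and rows from top to bottom; $\{x\}=\sum_t x_tq^{|\mathcal{F}_X|-t}$. For diagrams of equal size, $\mathcal{F}<\widetilde{\mathcal{F}}$ if $\mathcal{F}_i>\widetilde{\mathcal{F}}_i$ at the least $i$ with $\mathcal{F}_i\ne\widetilde{\mathcal{F}}_i$; $\mathrm{ind}_m(\mathcal{F})$ is the number of Ferrers diagrams of size $m$ in a $k\times(n-k)$ box preceding $\mathcal{F}$. Order on $\mathcal{G}_q(n,k)$: $X<Y$ if $|\mathcal{F}_X|>|\mathcal{F}_Y|$; or $|\mathcal{F}_X|=|\mathcal{F}_Y|$ and $\mathcal{F}_X<\mathcal{F}_Y$; or $\mathcal{F}_X=\mathcal{F}_Y$ and $\{x\}<\{y\}$ ($y$ the entries vector of $\mathcal{F}(Y)$). $p(a,\eta,s)$ is the number of partitions of $s$ whose Ferrers diagram fits in an $a\times\eta$ box. *)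

(* Defs.v *)
From HB Require Import structures.
From mathcomp Require Import all_boot all_order all_algebra.
Set Implicit Arguments. Unset Strict Implicit. Unset Printing Implicit Defensive.

Section Ferrers.
Variables (F : finFieldType) (idx : F -> 'I_#|F|) (k n : nat).

(* q = #|F| ; field elements identified with Z_q via the bijection idx. *)

(* Subspaces of F^n are represented by their canonical square generator
   matrix <<M>>%MS (mxalgebra); G_q(n,k) is the set of those of rank k. *)
Definition Grass : {set 'M[F]_n} :=
  [set M : 'M[F]_n | (<<M>>%MS == M) && (\rank M == k)].

Definition piv (A : 'M[F]_(k, n)) (i : 'I_k) : nat :=
  find (fun j : 'I_n => A i j != 0%R) (enum 'I_n).

(* entry (i, j) of A for a natural-number column index j (0 if j >= n) *)
Definition ent (A : 'M[F]_(k, n)) (i : 'I_k) (j : nat) : F :=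
  if @insub _ (fun j => j < n) 'I_n j is Some j' then A i j' else 0%R.

Definition is_rre (A : 'M[F]_(k, n)) : bool :=
  [&& [forall i, piv A i < n],
      [forall i, ent A i (piv A i) == 1%R],
      [forall i : 'I_k, forall i' : 'I_k, (i < i')%N ==> (piv A i < piv A i')] &
      [forall i : 'I_k, forall i' : 'I_k, (i != i') ==> (ent A i' (piv A i) == 0%R)]].

Definition RE (X : 'M[F]_n) : 'M[F]_(k, n) :=
  odflt 0%R [pick A : 'M[F]_(k, n) | is_rre A && (A == X)%MS].

Definition nonpiv (A : 'M[F]_(k, n)) : seq nat :=
  [seq j <- iota 0 n | j \notin [seq piv A i | i <- enum 'I_k]].

(* entries of row i of the Ferrers tableaux form, from right to left *)
Definition row_entries (A : 'M[F]_(k, n)) (i : 'I_k) : seq F :=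
  [seq ent A i j | j <- rev [seq j <- nonpiv A | piv A i < j]].

Definition entries (X : 'M[F]_n) : seq F :=
  flatten [seq row_entries (RE X) i | i <- enum 'I_k].

Definition entval (X : 'M[F]_n) : nat :=
  let s := entries X in
  \sum_(t < size s) (idx (nth 0%R s t) : nat) * #|F| ^ (size s - t.+1).

(* Ferrers diagram in a k x (n-k) box, given by its column sizes:
   D c = F_(c+1), the number of dots in the (c+1)-th column from the right *)
Definition diagram := {ffun 'I_(n - k) -> 'I_k.+1}.

Definition is_ferrers (D : diagram) : bool :=
  [forall c : 'I_(n - k), forall c' : 'I_(n - k), (c <= c')%N ==> (D c' <= D c)%N].

Definition dsize (D : diagram) : nat := \sum_(c < n - k) (D c : nat).

Definition diag_lt (D E : diagram) : bool :=
  [exists c : 'I_(n - k),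
     [forall c' : 'I_(n - k), (c' < c)%N ==> (D c' == E c')] && (E c < D c)%N].

Definition diag_of (X : 'M[F]_n) : diagram :=
  [ffun c : 'I_(n - k) =>
     inord #|[set i : 'I_k | piv (RE X) i < nth 0 (nonpiv (RE X)) (n - k - 1 - c)]|].

Definition ind_m (m : nat) (D : diagram) : nat :=
  #|[set E : diagram | [&& is_ferrers E, dsize E == m & diag_lt E D]]|.

Definition sub_lt (X Y : 'M[F]_n) : bool :=
  let DX := diag_of X in let DY := diag_of Y in
  (dsize DY < dsize DX)%N ||
  ((dsize DX == dsize DY) &&
   (diag_lt DX DY || ((DX == DY) && (entval X < entval Y)%N))).

Definition Ind (X : 'M[F]_n) : nat := #|[set Y in Grass | sub_lt Y X]|.

End Ferrers.

(* p(a, eta, s): number of partitions of s whose Ferrers diagram fits in an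
   a x eta box (at most a parts, each at most eta) *)
Definition npart (a eta s : nat) : nat :=
  #|[set f : {ffun 'I_a -> 'I_eta.+1} |
     [forall i : 'I_a, forall j : 'I_a, (i <= j)%N ==> (f j <= f i)%N] &&
     (\sum_(i < a) (f i : nat) == s)]|.

(* Main.v *)
Require Import Defs.
From mathcomp Require Import all_boot all_order all_algebra.
From mathcomp Require Import zify.

Module MP1.
Set Implicit Arguments. Unset Strict Implicit. Unset Printing Implicit Defensive.
Import GRing.Theory.
Local Open Scope ring_scope.
Local Open Scope nat_scope.

Section Basic.
Variables (F : finFieldType) (k n : nat).
Implicit Types (A B : 'M[F]_(k,n)) (i l : 'I_k).

Lemma ent_ord A i (j : 'I_n) : ent A i j = A i j.
Proof. by rewrite /ent; case: insubP => [j' _ /val_inj -> //|]; rewrite ltn_ord. Qed.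

Lemma ent_ge A i j : n <= j -> ent A i j = 0%R.
Proof. by move=> H; rewrite /ent; case: insubP => // j' /=; rewrite ltnNge H. Qed.

Lemma piv_before A i (j : 'I_n) : j < piv A i -> A i j = 0%R.
Proof.
move/(before_find j); rewrite nth_ord_enum; by move/negbFE/eqP.
Qed.

Lemma piv_first A i (j : 'I_n) : A i j != 0%R -> piv A i <= j.
Proof. by move=> H; rewrite leqNgt; apply/negP => /(piv_before) E; rewrite E eqxx in H. Qed.

Lemma piv_eq A i (j : 'I_n) : A i j != 0%R ->
  (forall j' : 'I_n, j' < j -> A i j' = 0%R) -> piv A i = j.
Proof.
move=> nz H; apply/eqP; rewrite eqn_leq piv_first // leqNgt; apply/negP => lt.
have lt' : piv A i < n by apply: ltn_trans lt (ltn_ord j).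
have hs : has (fun j => A i j != 0%R) (enum 'I_n) by rewrite has_find size_enum_ord.
have := nth_find j hs; rewrite -/(piv A i).
set o := nth j _ _; have Eo : (o : nat) = piv A i by rewrite /o nth_enum_ord.
by rewrite H ?eqxx // Eo.
Qed.

Lemma mulsel_entry m (W : 'M[F]_(m, n)) (p : 'I_k -> nat) (i : 'I_m) l (H : p l < n) :
  (W *m (\matrix_(j, l) (((j : nat) == p l)%:R)%R : 'M[F]_(n,k))) i l = W i (Ordinal H).
Proof.
rewrite !mxE (bigD1 (Ordinal H)) //= big1 => [|j ne]; first by rewrite !mxE eqxx mulr1 addr0.
rewrite !mxE; case: eqP => [E|]; last by rewrite mulr0.
by case/eqP: ne; apply: val_inj.
Qed.

Section RRE.
Variable A : 'M[F]_(k,n).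
Hypothesis HA : is_rre A.

Lemma rre_lt i : piv A i < n.
Proof. by case/and4P: HA => /forallP H _ _ _. Qed.

Definition pv i : 'I_n := Ordinal (rre_lt i).

Lemma rre_one i : A i (pv i) = 1%R.
Proof. case/and4P: HA => _ /forallP H _ _; by move/eqP: (H i); rewrite -ent_ord. Qed.

Lemma rre_off i (i' : 'I_k) : i != i' -> A i' (pv i) = 0%R.
Proof.
case/and4P: HA => _ _ _ /forallP H ne; move/forallP: (H i) => /(_ i').
by rewrite ne /= -ent_ord => /eqP.
Qed.

Lemma rre_incr i (i' : 'I_k) : i < i' -> piv A i < piv A i'.
Proof. case/and4P: HA => _ _ /forallP H _ lt; by move/forallP: (H i) => /(_ i'); rewrite lt. Qed.

Lemma rre_mono i (i' : 'I_k) : i <= i' -> piv A i <= piv A i'.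
Proof. rewrite leq_eqVlt => /orP[/eqP E|/rre_incr/ltnW//]. by rewrite (val_inj E). Qed.

Lemma rre_incr_inv i (i' : 'I_k) : piv A i < piv A i' -> i < i'.
Proof. by move=> H; rewrite ltnNge; apply/negP => /rre_mono; rewrite leqNgt H. Qed.

Definition sel : 'M[F]_(n, k) := \matrix_(j, l) (((j : nat) == piv A l)%:R)%R.

Lemma mul_sel : A *m sel = 1%:M.
Proof.
apply/matrixP => i l; rewrite !mxE (bigD1 (pv l)) //= big1 => [|j ne].
  rewrite !mxE eqxx mulr1 addr0.
  case: (eqVneq i l) => [->|ne]; first by rewrite rre_one.
  by rewrite rre_off // eq_sym.
rewrite !mxE; case: eqP => [E|]; last by rewrite mulr0.
by case/eqP: ne; apply: val_inj.
Qed.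

Lemma rre_row_free : row_free A.
Proof. by apply/row_freeP; exists sel; exact: mul_sel. Qed.

Lemma rre_rank : \rank A = k.
Proof. by apply/eqP; exact: rre_row_free. Qed.

Lemma sub_rre_decomp m (v : 'M[F]_(m, n)) : (v <= A)%MS -> v = (v *m sel) *m A.
Proof.
case/submxP => D ->. by rewrite -(mulmxA D A sel) mul_sel mulmx1.
Qed.

Lemma lead_sub (v : 'rV[F]_n) : (v <= A)%MS -> v != 0%R ->
  exists l, (forall j : 'I_n, j < piv A l -> v ord0 j = 0%R) /\ v ord0 (pv l) != 0%R.
Proof.
move=> sv nz; set c := v *m sel; have Ev := sub_rre_decomp sv.
have [l0 Hl0]: exists l, c ord0 l != 0%R.
  case: (pickP (fun l => c ord0 l != 0%R)) => [l Hl|H]; first by exists l.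
  case/negP: nz; rewrite Ev; apply/eqP/matrixP => a j; rewrite !mxE big1 // => l _.
  by rewrite (ord1 a); move/negbFE/eqP: (H l) => ->; rewrite mul0r.
case: (@arg_minnP _ l0 (fun l => c ord0 l != 0%R) (fun l : 'I_k => (l:nat)) Hl0) => l1 Hl1 Hmin.
exists l1; split.
  move=> j Hj; rewrite Ev !mxE big1 // => l _.
  case: (ltnP l l1) => Hll.
    case: (eqVneq (c ord0 l) 0%R) => [->|Hc]; first by rewrite mul0r.
    by have := Hmin l Hc; rewrite leqNgt Hll.
  rewrite (piv_before (i:=l) (j:=j)) ?mulr0 //.
  by apply: leq_trans Hj (rre_mono Hll).
rewrite Ev !mxE (bigD1 l1) //= big1 ?addr0 ?rre_one ?mulr1 // => l ne.
by rewrite rre_off ?mulr0 // eq_sym.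
Qed.

End RRE.

Lemma strict_gap (f : 'I_k -> nat) :
  (forall i (i' : 'I_k), i < i' -> f i < f i') ->
  forall i (i' : 'I_k), i <= i' -> f i + (i' - i) <= f i'.
Proof.
move=> Hf i i'.
suff H : forall m (i' : 'I_k), (i' : nat) = m -> i <= i' -> f i + (i' - i) <= f i' by exact: H.
move=> m; elim: m => [|m IH] {}i' Em Hle.
  have -> : i = i' by apply/val_inj => /=; lia.
  by rewrite subnn addn0.
case: (eqVneq i i') => [->|ne]; first by rewrite subnn addn0.
have Hm : m < k by have := ltn_ord i'; lia.
have Hi : i <= Ordinal Hm by rewrite /=; have : (i : nat) != i' by []; lia.
have := IH (Ordinal Hm) erefl Hi; have := Hf (Ordinal Hm) i'; rewrite /= Em ltnSn => /(_ isT).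
move=> H1 H2; have : (i : nat) <= m by []; lia.
Qed.

Lemma rre_piv_sub A B : is_rre A -> is_rre B -> (B <= A)%MS ->
  forall i, exists l, piv B i = piv A l.
Proof.
move=> HA HB sBA i.
have sv : (row i B <= A)%MS by apply: submx_trans (row_sub i B) sBA.
have nz : row i B != 0%R.
  apply/negP => /eqP/matrixP/(_ ord0 (pv HB i)); rewrite !mxE rre_one //.
  by move/eqP; rewrite oner_eq0.
case: (lead_sub HA sv nz) => l [H1 H2]; exists l; apply/eqP; rewrite eqn_leq.
apply/andP; split.
  by apply: (piv_first (j := pv HA l)); rewrite mxE in H2.
rewrite leqNgt; apply/negP => lt; have := H1 (pv HB i) lt.
by rewrite mxE rre_one //; move/eqP; rewrite oner_eq0.
Qed.

Lemma piv_le A B : is_rre A -> is_rre B -> (B <= A)%MS -> forall i, piv A i <= piv B i.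
Proof.
move=> HA HB sBA.
pose s i := odflt i [pick l | piv B i == piv A l].
have Hs i : piv B i = piv A (s i).
  rewrite /s; case: pickP => [l /eqP //|H].
  by case: (rre_piv_sub HA HB sBA i) => l E; move: (H l); rewrite E eqxx.
have Hstr i (i' : 'I_k) : i < i' -> s i < s i'.
  by move=> lt; apply: (rre_incr_inv HA); rewrite -!Hs; apply: rre_incr.
move=> i; rewrite Hs; apply: (rre_mono HA).
have k0 : 0 < k by have := ltn_ord i; lia.
have := strict_gap (f := fun i => val (s i)) Hstr (i := Ordinal k0) (i' := i) isT.
rewrite /= subn0; lia.
Qed.

Lemma rre_uniq A B : is_rre A -> is_rre B -> (A == B)%MS -> A = B.
Proof.
move=> HA HB /andP[sAB sBA].
have Ep i : piv A i = piv B i by apply/eqP; rewrite eqn_leq piv_le // piv_le.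
have Es : sel A = sel B by apply/matrixP => j l; rewrite !mxE Ep.
apply/row_matrixP => i.
have sv : (row i A <= B)%MS by apply: submx_trans (row_sub i A) sAB.
rewrite {1}(sub_rre_decomp HB sv) -Es -row_mul mul_sel // -row_mul mul1mx.
by [].
Qed.

End Basic.

End MP1.
Import MP1.

Module MP2.
Set Implicit Arguments. Unset Strict Implicit. Unset Printing Implicit Defensive.
Import GRing.Theory.
Local Open Scope ring_scope.
Local Open Scope nat_scope.

Section Exist.
Variables (F : finFieldType) (n : nat).

Lemma subB_sub m1 m2 (X Y : 'M[F]_(m1, n)) (C : 'M[F]_(m2, n)) :
  (X <= C)%MS -> (Y <= C)%MS -> ((X - Y)%R <= C)%MS.
Proof. by move=> H1 H2; apply: addmx_sub => //; rewrite eqmx_opp. Qed.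

Lemma rre_exists_rank N : forall m (M : 'M[F]_(m, n)), \rank M < N ->
  exists r (A : 'M[F]_(r, n)), is_rre A /\ (A == M)%MS.
Proof.
elim: N => [//|N IH] m M HN.
case: (eqVneq M 0%R) => [M0|Mnz].
  exists 0, 0%R; split.
    by apply/and4P; split; apply/forallP => -[].
  by rewrite M0; apply/andP; split; rewrite sub0mx.
have [x0 Hx0] : exists x : 'I_m * 'I_n, M x.1 x.2 != 0%R.
  case: (pickP (fun x : 'I_m * 'I_n => M x.1 x.2 != 0%R)) => [x Hx|H]; first by exists x.
  case/eqP: Mnz; apply/matrixP => i j; rewrite mxE; by move/negbFE/eqP: (H (i, j)).
case: (@arg_minnP _ x0 (fun x : 'I_m * 'I_n => M x.1 x.2 != 0%R) (fun x => val x.2) Hx0)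
  => [[i0 j0]] /= Hnz Hmin.
have M0l : forall i (j : 'I_n), j < j0 -> M i j = 0%R.
  move=> i j lt; apply/eqP; apply/negP => /negP H; have := Hmin (i, j) H; rewrite /=; lia.
have W0l : forall p (W : 'M[F]_(p, n)), (W <= M)%MS -> forall i (j : 'I_n), j < j0 -> W i j = 0%R.
  move=> p W /submxP [D ->] i j lt; rewrite !mxE big1 // => l _; by rewrite M0l ?mulr0.
pose v : 'rV[F]_n := (M i0 j0)^-1 *: row i0 M.
have v1 : v ord0 j0 = 1%R by rewrite !mxE mulVf.
have sv : (v <= M)%MS by rewrite scalemx_sub // row_sub.
pose N' := (M - col j0 M *m v)%R.
have N'0 : forall i, N' i j0 = 0%R.
  by move=> i; rewrite !mxE big_ord1 !mxE mulVf // mulr1 subrr.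
have sN : (N' <= M)%MS by apply: subB_sub => //; apply: submx_trans (submxMl _ _) sv.
have WN0 : forall p (W : 'M[F]_(p, n)), (W <= N')%MS -> forall i, W i j0 = 0%R.
  move=> p W /submxP [D E] i; rewrite E mxE big1 // => l _; by rewrite N'0 mulr0.
have rN : \rank N' < \rank M.
  have : (N' < M)%MS.
    rewrite ltmxE sN /=; apply/negP => sMN.
    have := WN0 _ _ (submx_trans sv sMN) ord0; rewrite v1; move/eqP; by rewrite oner_eq0.
  by rewrite ltmxErank => /andP[].
have [r' [A' [HA' /andP [sAN sNA]]]] := IH _ N' (leq_trans rN (ltnSE HN)).
have sAM : (A' <= M)%MS := submx_trans sAN sN.
pose c := v *m sel A'.
pose v' := (v - c *m A')%R.
have sv' : (v' <= M)%MS by apply: subB_sub => //; apply: submx_trans (submxMl _ _) sAM.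
have v'1 : v' ord0 j0 = 1%R.
  by rewrite mxE [X in (_ + X)%R]mxE (WN0 _ _ (submx_trans (submxMl c A') sAN)) subr0 v1.
have v'l : forall j : 'I_n, j < j0 -> v' ord0 j = 0%R by move=> j; apply: W0l.
have v'p : forall l, v' ord0 (pv HA' l) = 0%R.
  move=> l; have E : v' *m sel A' = 0%R.
    by rewrite mulmxBl -mulmxA mul_sel // mulmx1 subrr.
  have E' : (v' *m sel A') ord0 l = (0%R : 'rV[F]_r') ord0 l by rewrite E.
  by rewrite /sel (@mulsel_entry F r' n 1 v' (piv A') ord0 l (rre_lt HA' l)) in E'; apply: etrans E' _; rewrite mxE.
have A'j0 : forall l, A' l j0 = 0%R by apply: WN0.
have A'l : forall l (j : 'I_n), j < j0 -> A' l j = 0%R by move=> l; apply: W0l.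
have pA' : forall l, j0 < piv A' l.
  move=> l; rewrite ltnNge; apply/negP => le.
  have := rre_one HA' l; rewrite leq_eqVlt in le; case/orP: le => [/eqP E|lt].
    have -> : pv HA' l = j0 by apply: val_inj.
    by rewrite A'j0 => /eqP; rewrite eq_sym oner_eq0.
  by rewrite A'l // => /eqP; rewrite eq_sym oner_eq0.
pose A := col_mx v' A'.
have pAu : forall i, piv A (lshift r' i) = j0.
  move=> i; rewrite (ord1 i); apply: piv_eq; first by rewrite col_mxEu v'1 oner_eq0.
  by move=> j lt; rewrite col_mxEu v'l.
have pAd : forall l, piv A (rshift 1 l) = piv A' l.
  by move=> l; apply: eq_find => j; rewrite col_mxEd.
exists (1 + r'), A; split.
  apply/and4P; split.
  - apply/forallP => i; case: (split_ordP i) => i1 ->; first by rewrite pAu.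
    by rewrite pAd rre_lt.
  - apply/forallP => i; case: (split_ordP i) => i1 ->.
      by rewrite pAu ent_ord col_mxEu (ord1 i1) v'1.
    by rewrite pAd -[piv A' i1]/(val (pv HA' i1)) ent_ord col_mxEd rre_one.
  - apply/forallP => i; apply/forallP => i'.
    case: (split_ordP i) => i1 ->; case: (split_ordP i') => i2 -> /=; apply/implyP;
      rewrite ?pAu ?pAd /= => lt.
    all: try (by rewrite (ord1 i1) (ord1 i2) in lt); try (by apply: pA').
    all: try (by have := ltn_ord i2; lia).
    by apply: (rre_incr HA'); rewrite -(ltn_add2l 1).
  - apply/forallP => i; apply/forallP => i'.
    case: (split_ordP i) => i1 ->; case: (split_ordP i') => i2 -> /=; apply/implyP=> ne;
      rewrite ?pAu ?pAd.
    all: try (by case/eqP: ne; rewrite (ord1 i1) (ord1 i2)).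
    all: try (by rewrite ent_ord col_mxEd A'j0).
    all: try (by rewrite -[piv A' i1]/(val (pv HA' i1)) ent_ord col_mxEu (ord1 i2) v'p).
    rewrite -[piv A' i1]/(val (pv HA' i1)) ent_ord col_mxEd rre_off //.
apply/andP; split; first by rewrite col_mx_sub sv' sAM.
rewrite -addsmxE.
have -> : M = (N' + col j0 M *m v)%R by rewrite /N' subrK.
apply: addmx_sub; first by apply: submx_trans sNA (addsmxSr _ _).
apply: submx_trans (submxMl _ _) _.
have -> : v = (v' + c *m A')%R by rewrite /v' subrK.
apply: addmx_sub; first exact: addsmxSl.
by apply: submx_trans (submxMl _ _) (addsmxSr _ _).
Qed.

End Exist.

End MP2.
Import MP2.

Module MP3.
Set Implicit Arguments. Unset Strict Implicit. Unset Printing Implicit Defensive.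
Import GRing.Theory.
Local Open Scope ring_scope.
Local Open Scope nat_scope.

Section Grass.
Variables (F : finFieldType) (k n : nat).

Lemma rre_exists (M : 'M[F]_n) : \rank M = k ->
  exists A : 'M[F]_(k, n), is_rre A /\ (A == M)%MS.
Proof.
move=> rM; have [r [A [HA EA]]] := rre_exists_rank (ltnSn (\rank M)).
have Er : r = k by rewrite -(rre_rank HA) -rM; exact: eqmx_rank.
by subst r; exists A.
Qed.

Lemma RE_spec (X : 'M[F]_n) : X \in Grass F k n -> is_rre (RE k X) /\ (RE k X == X)%MS.
Proof.
rewrite inE => /andP [_ /eqP rX]; rewrite /RE; case: pickP => [A /andP [H1 H2] //|H].
by have [A [HA EA]] := rre_exists rX; move: (H A); rewrite HA EA.
Qed.

Lemma genmx_Grass (A : 'M[F]_(k, n)) : is_rre A -> <<A>>%MS \in Grass F k n.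
Proof. by move=> HA; rewrite inE genmx_id eqxx /= genmxE (rre_rank HA). Qed.

Lemma RE_genmx (A : 'M[F]_(k, n)) : is_rre A -> RE k <<A>>%MS = A.
Proof.
move=> HA; have [H1 H2] := RE_spec (genmx_Grass HA).
by apply: rre_uniq => //; apply/eqmxP; apply: eqmx_trans (eqmxP H2) (genmxE A).
Qed.

Lemma Grass_genmx (X : 'M[F]_n) : X \in Grass F k n -> X = <<RE k X>>%MS.
Proof.
move=> HX; have [H1 H2] := RE_spec HX.
move: HX; rewrite inE => /andP [/eqP E _]; rewrite -{1}E.
by apply: eq_genmx; apply: eqmx_sym; apply/eqmxP.
Qed.

Lemma RE_inj : {in Grass F k n &, injective (@RE F k n)}.
Proof. by move=> X Y HX HY E; rewrite (Grass_genmx HX) (Grass_genmx HY) E. Qed.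

Lemma card_Grass_RE (P : 'M[F]_(k, n) -> bool) :
  #|[set Y in Grass F k n | P (RE k Y)]| = #|[set A : 'M[F]_(k,n) | is_rre A && P A]|.
Proof.
rewrite -(card_in_imset (f := @RE F k n)); last first.
  by move=> X Y /setIdP [HX _] /setIdP [HY _]; exact: RE_inj.
apply: eq_card => A; rewrite [in RHS]inE; apply/imsetP/idP.
  case=> Y; rewrite inE => /andP [HY HP] ->; by rewrite HP (RE_spec HY).1.
move=> /andP [HA HP]; exists <<A>>%MS; last by rewrite RE_genmx.
by rewrite inE genmx_Grass // RE_genmx.
Qed.

End Grass.

End MP3.
Import MP3.

Module MP4.
Set Implicit Arguments. Unset Strict Implicit. Unset Printing Implicit Defensive.
Import GRing.Theory.

Lemma count_gt_iota x N : count (fun j => x < j) (iota 0 N) = N - x.+1.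
Proof.
elim: N => [//|N IH]; rewrite -[N.+1]addn1 iotaD count_cat IH /= addn0.
case: ltnP => H /=; lia.
Qed.

Lemma count_lt_iota t N : count (fun j => j < t) (iota 0 N) = minn t N.
Proof.
elim: N => [|N IH]; first by rewrite minn0.
rewrite -[N.+1]addn1 iotaD count_cat IH /= addn0; case: ltnP => H /=; lia.
Qed.

Lemma card_set_sum (T : finType) (P : pred T) : #|[set i | P i]| = \sum_(i : T) (P i : nat).
Proof. by rewrite -sum1_card big_mkcond; apply: eq_bigr => i _; rewrite inE; case: (P i). Qed.

Lemma card_ord_count (P : pred nat) a : #|[set i : 'I_a | P i]| = count P (iota 0 a).
Proof.
rewrite -sum1_card (eq_bigl (fun i : 'I_a => P i)); last by move=> i; rewrite inE.
by rewrite -(big_mkord P (fun _ => 1)) sum1_count /index_iota subn0.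
Qed.

Lemma card_ord_lt a t : #|[set i : 'I_a | i < t]| = minn t a.
Proof. by rewrite (card_ord_count (fun i => i < t)) count_lt_iota. Qed.

Lemma card_ord_gt a x : #|[set i : 'I_a | x < i]| = a - x.+1.
Proof. by rewrite (card_ord_count (fun i => x < i)) count_gt_iota. Qed.

Lemma count_split (T : Type) (a b : pred T) s :
  count a s = count (predI a b) s + count (predI a (predC b)) s.
Proof.
elim: s => //= x s ->; case: (a x); case: (b x) => /=; lia.
Qed.

Lemma count_mem_sub (T : eqType) (a : pred T) (s t : seq T) :
  uniq s -> uniq t -> {subset s <= t} ->
  count (fun x => a x && (x \in s)) t = count a s.
Proof.
move=> us ut sub; rewrite -count_filter; apply/permP.
apply: uniq_perm => //; first exact: filter_uniq.
by move=> x; rewrite mem_filter; apply/andP/idP => [[]//|H]; split=> //; apply: sub.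
Qed.

Section Conj.
Variables (a : nat) (f : 'I_a -> nat).

Definition conjf (c : nat) := #|[set i : 'I_a | c < f i]|.

Lemma conj_le c : conjf c <= a.
Proof. by rewrite /conjf; apply: leq_trans (max_card _) _; rewrite card_ord. Qed.

Lemma conj_mono c c' : c <= c' -> conjf c' <= conjf c.
Proof.
move=> H; apply: subset_leq_card; apply/subsetP => i; rewrite !inE => H'.
exact: leq_ltn_trans H H'.
Qed.

Hypothesis fmono : forall i i' : 'I_a, i <= i' -> f i' <= f i.

Lemma conj_lt_iff (i : 'I_a) c : (i < conjf c) = (c < f i).
Proof.
case: (ltnP c (f i)) => H.
  have : minn i.+1 a <= conjf c.
    rewrite -card_ord_lt; apply: subset_leq_card; apply/subsetP => i'.
    rewrite !inE ltnS => Hi'; exact: leq_trans H (fmono Hi').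
  have := ltn_ord i; lia.
apply/negbTE; rewrite -leqNgt.
have : conjf c <= minn i a.
  rewrite -card_ord_lt; apply: subset_leq_card; apply/subsetP => i'.
  rewrite !inE => Hc; rewrite ltnNge; apply/negP => Hii'.
  by have := leq_trans (fmono Hii') H; rewrite leqNgt Hc.
lia.
Qed.

Lemma conj_conj b (fb : forall i, f i <= b) (i : 'I_a) :
  #|[set c : 'I_b | i < conjf c]| = f i.
Proof.
have -> : [set c : 'I_b | i < conjf c] = [set c : 'I_b | c < f i].
  by apply/setP => c; rewrite !inE conj_lt_iff.
rewrite card_ord_lt.
by have := fb i; lia.
Qed.

End Conj.

Lemma conj_sum a b (f : 'I_a -> nat) : (forall i, f i <= b) ->
  \sum_(c < b) conjf f c = \sum_(i < a) f i.
Proof.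
move=> fb; rewrite /conjf.
under eq_bigr do rewrite card_set_sum.
rewrite exchange_big /=; apply: eq_bigr => i _.
by rewrite -card_set_sum card_ord_lt; have := fb i; lia.
Qed.

End MP4.
Import MP4.

Module MP5.
Set Implicit Arguments. Unset Strict Implicit. Unset Printing Implicit Defensive.
Import GRing.Theory.
Local Open Scope ring_scope.
Local Open Scope nat_scope.

Lemma nth_count_rev (t : seq nat) x c : sorted (fun a b => b < a) t -> c < size t ->
  (x < nth 0 t c) = (c < count (fun j => x < j) t).
Proof.
elim: t c => [//|y t IH] c /= Hs Hc.
have Hall : all (fun z => z < y) t.
  by apply: (order_path_min (leT := fun a b => b < a)) Hs => a b d /= H1 H2; lia.
case: (ltnP x y) => Hxy.
  case: c Hc => [|c] Hc //=; rewrite add1n ltnS IH //; exact: path_sorted Hs.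
have E0 : count (fun j => x < j) t = 0.
  apply/eqP; rewrite -leqn0 leqNgt -has_count; apply/hasPn => z Hz.
  move/allP: Hall => /(_ z Hz) /= H; lia.
rewrite E0 /=; case: c Hc => [|c] Hc /=.
  by apply/negbTE; rewrite -leqNgt.
have := mem_nth 0 (ltnSE Hc) => Hm; move/allP: Hall => /(_ _ Hm) /= H.
apply/negbTE; rewrite -leqNgt; lia.
Qed.

Lemma nth_count (s : seq nat) x c : sorted ltn s -> c < size s ->
  (x < nth 0 s (size s - c.+1)) = (c < count (fun j => x < j) s).
Proof.
move=> Hs Hc; rewrite -nth_rev // -count_rev; apply: nth_count_rev; last by rewrite size_rev.
by rewrite rev_sorted.
Qed.

Section Piv.
Variables (F : finFieldType) (k n : nat).
Implicit Types (i : 'I_k).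

Definition pivs (A : 'M[F]_(k, n)) := [seq piv A i | i <- enum 'I_k].
Definition rl (A : 'M[F]_(k, n)) (i : 'I_k) := count (fun j => piv A i < j) (nonpiv A).
Definition dgA (A : 'M[F]_(k, n)) : diagram k n :=
  [ffun c : 'I_(n - k) =>
     inord #|[set i : 'I_k | piv A i < nth 0 (nonpiv A) (n - k - 1 - c)]|].

Lemma size_row_entries A i : size (row_entries A i) = rl A i.
Proof. by rewrite /row_entries size_map size_rev size_filter. Qed.

Variable A : 'M[F]_(k, n).
Hypothesis HA : is_rre A.

Lemma piv_inj : injective (piv A).
Proof.
move=> i i' E; apply/eqP; case: (ltngtP i i') => [H|H|/val_inj -> //].
  by have := rre_incr HA H; rewrite E ltnn.
by have := rre_incr HA H; rewrite E ltnn.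
Qed.

Lemma pivs_uniq : uniq (pivs A).
Proof. by rewrite map_inj_uniq ?enum_uniq //; exact: piv_inj. Qed.

Lemma pivs_sub : {subset pivs A <= iota 0 n}.
Proof. by move=> x /mapP [i _ ->]; rewrite mem_iota add0n rre_lt. Qed.

Lemma size_nonpiv : size (nonpiv A) = n - k.
Proof.
rewrite /nonpiv size_filter.
have E : count (fun x => x \in pivs A) (iota 0 n) = k.
  transitivity (count predT (pivs A)).
    by rewrite -(count_mem_sub predT pivs_uniq (iota_uniq 0 n) pivs_sub).
  by rewrite count_predT size_map size_enum_ord.
have := count_predC (fun j => j \in pivs A) (iota 0 n); rewrite size_iota E => H.
have -> : count (fun j => j \notin [seq piv A i | i <- enum 'I_k]) (iota 0 n) =
  count (predC (fun j => j \in pivs A)) (iota 0 n) by [].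
lia.
Qed.

Lemma sorted_nonpiv : sorted ltn (nonpiv A).
Proof. by apply: sorted_filter; [exact: ltn_trans | exact: iota_ltn_sorted]. Qed.

Lemma piv_bound i : piv A i + (k - i.+1) < n.
Proof.
have k0 : 0 < k by have := ltn_ord i; lia.
have Hl : k.-1 < k by lia.
have := strict_gap (f := piv A) (rre_incr HA) (i := i) (i' := Ordinal Hl).
have := rre_lt HA (Ordinal Hl); have := ltn_ord i; rewrite /=; move=> H1 H2 /(_ ltac:(lia)).
lia.
Qed.

Lemma piv_ge i : i <= piv A i.
Proof.
have k0 : 0 < k by have := ltn_ord i; lia.
have := strict_gap (f := piv A) (rre_incr HA) (i := Ordinal k0) (i' := i) isT.
rewrite /= subn0; lia.
Qed.

Lemma rl_formula i : rl A i = (n - (piv A i).+1) - (k - i.+1).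
Proof.
rewrite /rl /nonpiv count_filter.
have := count_split (fun j => piv A i < j) (fun j => j \in pivs A) (iota 0 n).
rewrite count_gt_iota.
have -> : count (predI (fun j => piv A i < j) (fun j => j \in pivs A)) (iota 0 n) = k - i.+1.
  rewrite (count_mem_sub (fun j => piv A i < j) pivs_uniq (iota_uniq 0 n) pivs_sub).
  rewrite /pivs count_map -card_ord_gt.
  rewrite (card_ord_count (fun j => i < j)).
  rewrite -val_enum_ord count_map; apply: eq_count => i' /=.
  by apply/idP/idP => H; [exact: (rre_incr_inv HA H) | exact: (rre_incr HA H)].
have -> : count (predI (fun j => piv A i < j) (predC (fun j => j \in pivs A))) (iota 0 n) =
          count (predI (fun j => piv A i < j) (fun j => j \notin [seq piv A i | i <- enum 'I_k])) (iota 0 n).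
  by [].
move=> ->; rewrite addKn; apply: eq_count => j /=; by rewrite andbC.
Qed.

Lemma rl_le i : rl A i <= n - k.
Proof. rewrite rl_formula; have := piv_bound i; have := piv_ge i; lia. Qed.

Lemma rl_mono i i' : i <= i' -> rl A i' <= rl A i.
Proof.
move=> H; rewrite !rl_formula.
case: (eqVneq i i') => [->//|ne].

have := strict_gap (f := piv A) (rre_incr HA) H; have := piv_bound i'; have := piv_bound i; have := piv_ge i; lia.
Qed.

Lemma dgA_val c : (dgA A c : nat) = conjf (rl A) c.
Proof.
rewrite ffunE inordK; last by rewrite ltnS; apply: leq_trans (max_card _) _; rewrite card_ord.
rewrite /conjf; apply: eq_card => i; rewrite !inE.
have Hc := ltn_ord c.
have -> : n - k - 1 - c = size (nonpiv A) - c.+1 by rewrite size_nonpiv; lia.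
rewrite nth_count ?sorted_nonpiv // size_nonpiv //.
Qed.

End Piv.

End MP5.
Import MP5.

Module MP6.
Set Implicit Arguments. Unset Strict Implicit. Unset Printing Implicit Defensive.
Import GRing.Theory.
Local Open Scope ring_scope.
Local Open Scope nat_scope.

Section Tp.
Variables (F : finFieldType) (k n : nat) (p : 'I_k -> nat).
Implicit Types (i : 'I_k).

Definition pivsp := [seq p i | i <- enum 'I_k].
Definition freep (x : 'I_k * 'I_n) : bool := ((x.2 : nat) \notin pivsp) && (p x.1 < x.2).
Local Notation FT := {x : 'I_k * 'I_n | freep x}.
Definition mk (g : {ffun FT -> F}) : 'M[F]_(k, n) :=
  \matrix_(i, j) (if (j : nat) == p i then 1%R else
                  if @insub _ freep FT (i, j) is Some x then g x else 0%R).
Definition resp (A : 'M[F]_(k, n)) : {ffun FT -> F} := [ffun x => A (val x).1 (val x).2].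
Definition Tp := [set A : 'M[F]_(k, n) | is_rre A && [forall i, piv A i == p i]].

Hypothesis pstr : forall i (i' : 'I_k), i < i' -> p i < p i'.
Hypothesis plt : forall i, p i < n.

Lemma p_inj : injective p.
Proof.
move=> i i' E; apply/eqP; case: (ltngtP i i') => [H|H|/val_inj -> //].
  by have := pstr H; rewrite E ltnn.
by have := pstr H; rewrite E ltnn.
Qed.

Lemma mk_entry_notfree g i (j : 'I_n) : (j : nat) != p i -> ~~ freep (i, j) -> mk g i j = 0%R.
Proof.
move=> ne nf; rewrite mxE (negbTE ne); case: insubP => // x Hx; by rewrite (negbTE nf) in Hx.
Qed.

Lemma mk_piv g i : piv (mk g) i = p i.
Proof.
apply: (piv_eq (j := Ordinal (plt i))); first by rewrite mxE /= eqxx oner_eq0.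
move=> j' lt; apply: mk_entry_notfree; first by rewrite neq_ltn lt.
by rewrite /freep /= ltnNge (ltnW lt) andbF.
Qed.

Lemma mk_rre g : is_rre (mk g).
Proof.
apply/and4P; split.
- by apply/forallP => i; rewrite mk_piv plt.
- apply/forallP => i; rewrite mk_piv.
  by rewrite -[p i]/(val (Ordinal (plt i))) ent_ord mxE eqxx.
- apply/forallP => i; apply/forallP => i'; apply/implyP => lt; rewrite !mk_piv; exact: pstr.
- apply/forallP => i; apply/forallP => i'; apply/implyP => ne; rewrite mk_piv.
  rewrite -[p i]/(val (Ordinal (plt i))) ent_ord mk_entry_notfree //=.
    by apply: contra ne => /eqP /p_inj ->.
  by rewrite /freep /= negb_and negbK map_f ?mem_enum.
Qed.

Lemma mk_in g : mk g \in Tp.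
Proof. by rewrite inE mk_rre; apply/forallP => i; rewrite mk_piv. Qed.

Lemma res_mk g : resp (mk g) = g.
Proof.
apply/ffunP => x; rewrite ffunE mxE.
have Hf := valP x; case/andP: (Hf) => _ lt.
rewrite ifN; last by rewrite neq_ltn lt orbT.
have -> : ((val x).1, (val x).2) = val x by case: (val x).
by rewrite valK.
Qed.

Lemma Tp_entry A i (j : 'I_n) : A \in Tp -> ~~ freep (i, j) ->
  A i j = if (j : nat) == p i then 1%R else 0%R.
Proof.
rewrite inE => /andP [HA /forallP Hp] nf.
have Hp' : forall i, piv A i = p i by move=> i'; apply/eqP.
case: eqP => [E|ne].
  have -> : j = pv HA i by apply: val_inj; rewrite /= Hp'.
  exact: rre_one.
move: nf; rewrite /freep /= negb_and negbK => /orP [/mapP [i' _ E]|].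
  have -> : j = pv HA i' by apply: val_inj; rewrite /= Hp'.
  apply: rre_off; apply/eqP => Ei; apply: ne; by rewrite E Ei.
rewrite -leqNgt leq_eqVlt => /orP [/eqP E|lt]; first by case: ne.
by apply: piv_before; rewrite Hp'.
Qed.

Lemma res_inj : {in Tp &, injective resp}.
Proof.
move=> A B HA HB E; apply/matrixP => i j.
case Hf: (freep (i, j)).
  have := congr1 (fun f : {ffun FT -> F} => f (Sub (i, j) Hf : FT)) E; by rewrite !ffunE.
by rewrite !Tp_entry // Hf.
Qed.

Lemma card_Tp : #|Tp| = (#|F| ^ #|{: FT}|)%N.
Proof.
rewrite -(card_in_imset res_inj) -card_ffun; apply: eq_card => g.
rewrite inE; apply/imsetP; exists (mk g); [exact: mk_in | by rewrite res_mk].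
Qed.

End Tp.

End MP6.
Import MP6.

Module MP7.
Set Implicit Arguments. Unset Strict Implicit. Unset Printing Implicit Defensive.
Import GRing.Theory.
Local Open Scope ring_scope.
Local Open Scope nat_scope.

Definition entriesA (F : finFieldType) k n (A : 'M[F]_(k, n)) : seq F :=
  flatten [seq row_entries A i | i <- enum 'I_k].

Section Val.
Variables (F : finFieldType) (idx : F -> 'I_#|F|).
Hypothesis Hidx : bijective idx.

Definition valseq (s : seq F) : nat :=
  \sum_(t < size s) (idx (nth 0%R s t) : nat) * #|F| ^ (size s - t.+1).

Lemma valseq_cons x s : valseq (x :: s) = idx x * #|F| ^ size s + valseq s.
Proof.
rewrite /valseq /= big_ord_recl /= subSS subn0; congr (_ + _).
Qed.

Lemma q_gt0 : 0 < #|F|.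
Proof. by apply/card_gt0P; exists 0%R. Qed.

Lemma valseq_lt s : valseq s < #|F| ^ size s.
Proof.
elim: s => [|x s IH]; first by rewrite /valseq big_ord0.
rewrite valseq_cons /= expnS.
have := ltn_ord (idx x); set d := (idx x : nat); set Q := #|F| ^ size s in IH * => Hd.
have : d * Q + Q <= #|F| * Q by rewrite addnC -mulSn leq_mul2r Hd orbT.
by move=> H; apply: leq_trans H; rewrite ltn_add2l.
Qed.

Lemma valseq_inj s t : size s = size t -> valseq s = valseq t -> s = t.
Proof.
elim: s t => [|x s IH] [|y t] //= [Es] E.
rewrite !valseq_cons Es in E.
have Hs := valseq_lt s; have Ht := valseq_lt t; rewrite Es in Hs.
have Ed : (idx x : nat) = idx y.
  have := congr1 (fun m => m %/ #|F| ^ size t) E.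
  by rewrite !divnMDl ?expn_gt0 ?q_gt0 // !divn_small // !addn0.
have Er : valseq s = valseq t.
  have := congr1 (fun m => m %% #|F| ^ size t) E.
  by rewrite !modnMDl !modn_small.
have Ex : x = y by apply: (bij_inj Hidx); apply: val_inj.
by rewrite Ex (IH t Es Er).
Qed.

End Val.

Section Entries.
Variables (F : finFieldType) (k n : nat) (p : 'I_k -> nat).
Implicit Types (i : 'I_k).
Hypothesis pstr : forall i (i' : 'I_k), i < i' -> p i < p i'.
Hypothesis plt : forall i, p i < n.

Local Notation TP := (Tp F n p).
Definition nonpivp := [seq j <- iota 0 n | j \notin pivsp p].

Lemma Tp_piv (A : 'M[F]_(k, n)) : A \in TP -> is_rre A /\ forall i, piv A i = p i.
Proof. by rewrite inE => /andP [HA /forallP H]; split => // i; apply/eqP. Qed.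

Lemma Tp_nonpiv A : A \in TP -> nonpiv A = nonpivp.
Proof.
case/Tp_piv => _ Hp; rewrite /nonpiv /nonpivp /pivsp.
by have -> : [seq piv A i | i <- enum 'I_k] = [seq p i | i <- enum 'I_k] by apply: eq_map.
Qed.

Lemma Tp_row A i : A \in TP ->
  row_entries A i = [seq ent A i j | j <- rev [seq j <- nonpivp | p i < j]].
Proof.
move=> HT; rewrite /row_entries (Tp_nonpiv HT); by case/Tp_piv: HT => _ ->.
Qed.

Lemma Tp_rl A i : A \in TP -> rl A i = count (fun j => p i < j) nonpivp.
Proof. by move=> HT; rewrite /rl (Tp_nonpiv HT); case/Tp_piv: HT => _ ->. Qed.

Lemma size_entriesA (A : 'M[F]_(k, n)) : size (entriesA A) = \sum_i rl A i.
Proof.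
rewrite /entriesA size_flatten /shape -map_comp sumnE big_map big_enum /=.
by apply: eq_bigr => i _; rewrite /= size_row_entries.
Qed.

Lemma card_FT : #|{: {x : 'I_k * 'I_n | freep p x}}| = \sum_i count (fun j => p i < j) nonpivp.
Proof.
rewrite card_sig -sum1_card big_mkcond /=.
rewrite -(pair_bigA _ (fun i j => if (i, j) \in [pred x | freep p x] then 1 else 0)).
apply: eq_bigr => i _.
rewrite /nonpivp count_filter -(card_ord_count (predI (fun j => p i < j) (fun j => j \notin pivsp p))).
rewrite card_set_sum; apply: eq_bigr => j _; rewrite inE /freep /=.
by rewrite andbC; case: (_ && _).
Qed.

Lemma entries_inj A B : A \in TP -> B \in TP -> entriesA A = entriesA B -> A = B.
Proof.
move=> HA HB E; apply: (res_inj HA HB).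
have Esh : shape [seq row_entries A i | i <- enum 'I_k] = shape [seq row_entries B i | i <- enum 'I_k].
  rewrite /shape -!map_comp; apply: eq_map => i /=.
  by rewrite !size_row_entries (Tp_rl i HA) (Tp_rl i HB).
have Ess : [seq row_entries A i | i <- enum 'I_k] = [seq row_entries B i | i <- enum 'I_k].
  by rewrite -(flattenK [seq row_entries A i | i <- enum 'I_k]) Esh -/(entriesA A) E flattenK.
apply/ffunP => x; rewrite !ffunE.
case: x => [[i j] Hf] /=.
have Ei : row_entries A i = row_entries B i.
  by move/eq_in_map: Ess => /(_ i); rewrite mem_enum => ->.
rewrite (Tp_row i HA) (Tp_row i HB) in Ei.
move/eq_in_map: Ei => /(_ j); rewrite !ent_ord; apply.
case/andP: Hf => H1 H2; rewrite mem_rev mem_filter H2 /nonpivp mem_filter H1 /=.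
by rewrite mem_iota add0n ltn_ord.
Qed.

End Entries.

End MP7.
Import MP7.

Module MP8.
Set Implicit Arguments. Unset Strict Implicit. Unset Printing Implicit Defensive.
Import GRing.Theory.
Local Open Scope ring_scope.
Local Open Scope nat_scope.

Section Key.
Variables (F : finFieldType) (k n : nat).
Hypothesis Hkn : k <= n.
Implicit Types (i : 'I_k) (A B : 'M[F]_(k, n)) (D : diagram k n).

Lemma rl_from_dg A i : is_rre A -> rl A i = #|[set c : 'I_(n - k) | i < dgA A c]|.
Proof.
move=> HA; rewrite -(conj_conj (f := rl A) (rl_mono HA) (rl_le HA) i).
by apply: eq_card => c; rewrite !inE (dgA_val HA).
Qed.

Lemma dg_piv A B : is_rre A -> is_rre B -> dgA A = dgA B -> forall i, piv A i = piv B i.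
Proof.
move=> HA HB E i.
have Erl : rl A i = rl B i by rewrite !rl_from_dg // E.
move: Erl; rewrite !rl_formula //.
have := piv_bound HA i; have := piv_bound HB i; lia.
Qed.

Lemma dsize_dgA A : is_rre A -> dsize (dgA A) = \sum_i rl A i.
Proof.
move=> HA; rewrite /dsize -(conj_sum (rl_le HA)); apply: eq_bigr => c _.
exact: dgA_val.
Qed.

Lemma ferrers_dgA A : is_rre A -> is_ferrers (dgA A).
Proof.
move=> HA; apply/forallP => c; apply/forallP => c'; apply/implyP => H.
by rewrite !(dgA_val HA); apply: conj_mono.
Qed.

Definition fD D (i : 'I_k) := conjf (fun c : 'I_(n - k) => val (D c)) i.
Definition pD D (i : 'I_k) := n - k + i - fD D i.

Lemma fD_le D i : fD D i <= n - k.
Proof. exact: conj_le. Qed.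

Lemma pD_str D i (i' : 'I_k) : i < i' -> pD D i < pD D i'.
Proof.
move=> H; rewrite /pD; have := fD_le D i; have := fD_le D i'.
have := @conj_mono _ (fun c : 'I_(n - k) => val (D c)) i i' (ltnW H); rewrite -/(fD D i) -/(fD D i').
lia.
Qed.

Lemma pD_lt D i : pD D i < n.
Proof. rewrite /pD; have := ltn_ord i; lia. Qed.

Lemma dgA_Tp D A : is_ferrers D -> A \in Tp F n (pD D) -> dgA A = D.
Proof.
move=> HD HT; have [HA Hp] := Tp_piv HT.
have Erl : forall i, rl A i = fD D i.
  move=> i; rewrite rl_formula // Hp /pD; have := fD_le D i; have := ltn_ord i; lia.
apply/ffunP => c; apply: val_inj => /=; rewrite (dgA_val HA) /conjf.
have -> : [set i : 'I_k | c < rl A i] = [set i : 'I_k | c < fD D i] by apply/setP => i; rewrite !inE Erl.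
have Dmono : forall c c' : 'I_(n - k), c <= c' -> (D c' : nat) <= D c.
  by move=> x y Hxy; move/forallP: HD => /(_ x) /forallP /(_ y); rewrite Hxy.
have Db : forall c : 'I_(n - k), (D c : nat) <= k by move=> x; rewrite -ltnS ltn_ord.
rewrite -(conj_conj (f := fun c : 'I_(n - k) => val (D c)) Dmono Db c).
by apply: eq_card => i; rewrite !inE.
Qed.

Definition A0 D : 'M[F]_(k, n) := mk (F := F) (p := pD D) [ffun => 0%R].

Lemma A0_in D : A0 D \in Tp F n (pD D).
Proof. by apply: mk_in; [exact: pD_str | exact: pD_lt]. Qed.

Lemma SD_Tp D : is_ferrers D ->
  [set A : 'M[F]_(k, n) | is_rre A && (dgA A == D)] = Tp F n (pD D).
Proof.
move=> HD; apply/setP => A; rewrite inE; apply/andP/idP.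
  case=> HA /eqP EA; have [H0 _] := Tp_piv (A0_in D).
  have E := dg_piv HA H0 (etrans EA (esym (dgA_Tp HD (A0_in D)))).
  rewrite inE HA; apply/forallP => i; rewrite E.
  by case: (Tp_piv (A0_in D)) => _ ->.
move=> HT; have [HA _] := Tp_piv HT; by rewrite HA (dgA_Tp HD HT).
Qed.

Lemma size_entries_SD D A : is_ferrers D -> is_rre A -> dgA A = D ->
  size (entriesA A) = dsize D.
Proof. by move=> HD HA <-; rewrite size_entriesA dsize_dgA. Qed.

Lemma card_SD D : is_ferrers D ->
  #|[set A : 'M[F]_(k, n) | is_rre A && (dgA A == D)]| = (#|F| ^ dsize D)%N.
Proof.
move=> HD; rewrite SD_Tp // card_Tp; [|exact: pD_str|exact: pD_lt].
congr (_ ^ _); rewrite card_FT; have [HA _] := Tp_piv (A0_in D).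
have E := dgA_Tp HD (A0_in D).
transitivity (dsize (dgA (A0 D))); last by rewrite E.
rewrite dsize_dgA //; apply: eq_bigr => i _.
by rewrite (Tp_rl i (A0_in D)).
Qed.

End Key.

End MP8.
Import MP8.

Module MP9.
Set Implicit Arguments. Unset Strict Implicit. Unset Printing Implicit Defensive.
Import GRing.Theory.
Local Open Scope ring_scope.
Local Open Scope nat_scope.

Lemma sum_range_eq a b x c :
  \sum_(a <= i < b) ((x == i) * c) = ((a <= x) && (x < b)) * c.
Proof.
elim: b => [|b IH]; first by rewrite big_geq // ltn0 andbF.
case: (leqP a b) => Hab.
  rewrite big_nat_recr //= IH.
  case: (eqVneq x b) => [->|ne]; first by rewrite Hab ltnn ltnSn /= mul0n add0n mul1n.
  by rewrite ltnS [x <= b]leq_eqVlt (negbTE ne) mul0n addn0.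
rewrite big_geq //; case: (leqP a x) => H //=; rewrite ltnS.
by have -> : (x <= b) = false by apply/negbTE; rewrite -ltnNge; apply: leq_trans Hab H.
Qed.

Lemma sum_bool_mul (T : finType) (P b : pred T) c :
  \sum_(i | P i) (b i * c) = #|[set i | P i && b i]| * c.
Proof.
rewrite -sum_nat_const [RHS](eq_bigl (fun i => P i && b i)); last by move=> i; rewrite inE.
rewrite big_mkcondr; apply: eq_bigr => i _; by case: (b i); rewrite ?mul1n ?mul0n.
Qed.

Section NP.
Variables (k n : nat).

Definition Phi (f : {ffun 'I_k -> 'I_(n - k).+1}) : diagram k n :=
  [ffun c : 'I_(n - k) => inord (conjf (fun i => val (f i)) c)].
Definition Psi (D : diagram k n) : {ffun 'I_k -> 'I_(n - k).+1} :=
  [ffun i : 'I_k => inord (conjf (fun c : 'I_(n - k) => val (D c)) i)].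

Lemma Phi_val f c : (Phi f c : nat) = conjf (fun i => val (f i)) c.
Proof. by rewrite ffunE inordK // ltnS conj_le. Qed.
Lemma Psi_val D i : (Psi D i : nat) = conjf (fun c : 'I_(n - k) => val (D c)) i.
Proof. by rewrite ffunE inordK // ltnS conj_le. Qed.

Lemma npart_ferrers s :
  npart k (n - k) s = #|[set D : diagram k n | is_ferrers D && (dsize D == s)]|.
Proof.
rewrite /npart.
set NP := [set f : {ffun 'I_k -> 'I_(n - k).+1} | _].
have NPmono : forall f, f \in NP -> forall i i' : 'I_k, i <= i' -> (f i' : nat) <= f i.
  move=> f; rewrite inE => /andP [/forallP H _] i i' Hii'.
  by move/forallP: (H i) => /(_ i'); rewrite Hii'.
have fb : forall (f : {ffun 'I_k -> 'I_(n - k).+1}) i, (f i : nat) <= n - k.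
  by move=> f i; rewrite -ltnS ltn_ord.
have Db : forall (D : diagram k n) c, (D c : nat) <= k by move=> D c; rewrite -ltnS ltn_ord.
rewrite -(card_in_imset (f := Phi)).
  apply: eq_card => D; rewrite inE; apply/imsetP/andP.
    case=> f Hf ->; split.
      apply/forallP => c; apply/forallP => c'; apply/implyP => H.
      by rewrite !Phi_val; apply: conj_mono.
    move: (Hf); rewrite inE => /andP [_ /eqP <-].
    apply/eqP; transitivity (\sum_(c < n - k) conjf (fun i => val (f i)) c).
      by apply: eq_bigr => c _; exact: Phi_val.
    by apply: conj_sum => i; exact: fb.
  case=> HD /eqP Hs.
  have Dmono : forall c c' : 'I_(n - k), c <= c' -> (D c' : nat) <= D c.
    by move=> x y Hxy; move/forallP: HD => /(_ x) /forallP /(_ y); rewrite Hxy.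
  exists (Psi D).
    rewrite inE; apply/andP; split.
      apply/forallP => i; apply/forallP => i'; apply/implyP => H.
      by rewrite !Psi_val; apply: conj_mono.
    apply/eqP; transitivity (\sum_(i < k) conjf (fun c : 'I_(n - k) => val (D c)) i).
      by apply: eq_bigr => i _; exact: Psi_val.
    rewrite conj_sum; [by rewrite -Hs | by move=> c; exact: Db].
  apply/ffunP => c; apply: val_inj => /=; rewrite Phi_val.
  rewrite -(conj_conj (f := fun c : 'I_(n - k) => val (D c)) Dmono (Db D) c).
  by apply: eq_card => i; rewrite !inE /= Psi_val.
move=> f g Hf Hg E; apply/ffunP => i; apply: val_inj => /=.
rewrite -(conj_conj (f := fun i => val (f i)) (NPmono f Hf) (fb f) i).
rewrite -(conj_conj (f := fun i => val (g i)) (NPmono g Hg) (fb g) i).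
by apply: eq_card => c; rewrite !inE -!Phi_val E.
Qed.

End NP.

End MP9.
Import MP9.

Module MP10.
Set Implicit Arguments. Unset Strict Implicit. Unset Printing Implicit Defensive.
Import GRing.Theory.
Local Open Scope ring_scope.
Local Open Scope nat_scope.

Section Final.
Variables (F : finFieldType) (idx : F -> 'I_#|F|) (k n : nat).
Hypothesis Hidx : bijective idx.
Hypothesis Hkn : k <= n.
Implicit Types (A B : 'M[F]_(k, n)) (D : diagram k n).

Definition evA A := valseq idx (entriesA A).
Local Notation SD D := [set A : 'M[F]_(k, n) | is_rre A && (dgA A == D)].

Lemma SD_ev_lt D A : is_ferrers D -> is_rre A -> dgA A = D -> evA A < #|F| ^ dsize D.
Proof. by move=> HD HA E; rewrite -(size_entries_SD HD HA E); apply: valseq_lt. Qed.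

Lemma SD_ev_inj D : is_ferrers D -> {in SD D &, injective evA}.
Proof.
move=> HD A B; rewrite !inE => /andP [HA /eqP EA] /andP [HB /eqP EB] E.
have HA' : A \in Tp F n (pD D) by rewrite -(SD_Tp F Hkn HD) inE HA EA eqxx.
have HB' : B \in Tp F n (pD D) by rewrite -(SD_Tp F Hkn HD) inE HB EB eqxx.
apply: (entries_inj HA' HB').
apply: (valseq_inj Hidx) => //.
by rewrite (size_entries_SD HD HA EA) (size_entries_SD HD HB EB).
Qed.

Lemma count_ev_lt D v : is_ferrers D -> v <= #|F| ^ dsize D ->
  #|[set A | (is_rre A && (dgA A == D)) && (evA A < v)]| = v.
Proof.
move=> HD Hv; set N := #|F| ^ dsize D.
pose g A : 'I_N.+1 := inord (evA A).
have gval : forall A, A \in SD D -> (g A : nat) = evA A.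
  move=> A; rewrite inE => /andP [HA /eqP EA]; rewrite /g inordK //.
  by apply: leq_trans (SD_ev_lt HD HA EA) _.
have ginj : {in SD D &, injective g}.
  by move=> A B HA HB E; apply: (SD_ev_inj HD) => //; rewrite -!gval // E.
have Himg : g @: SD D =i [set t : 'I_N.+1 | t < N].
  apply/subset_cardP.
    by rewrite (card_in_imset ginj) (card_SD F Hkn HD) card_ord_lt; lia.
  apply/subsetP => t /imsetP [A HA ->]; rewrite inE gval //.
  by move: HA; rewrite inE => /andP [HA /eqP EA]; apply: SD_ev_lt.
have sub : {in [set A | (is_rre A && (dgA A == D)) && (evA A < v)] &, injective g}.
  by move=> A B; rewrite !inE => /andP [H1 _] /andP [H2 _]; apply: ginj; rewrite inE.
rewrite -(card_in_imset sub).
transitivity #|[set t : 'I_N.+1 | t < v]|; last by rewrite card_ord_lt; lia.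
apply: eq_card => t; rewrite inE; apply/imsetP/idP.
  case=> A; rewrite inE => /andP [H1 H2] ->; by rewrite gval // inE.
move=> Ht; have : t \in [set t : 'I_N.+1 | t < N] by rewrite inE; lia.
rewrite -Himg => /imsetP [A HA Et]; exists A => //.
have HA' := HA; rewrite inE in HA'; by rewrite inE HA' /= -gval // -Et.
Qed.

End Final.

End MP10.
Import MP10.

Module MP11.
Set Implicit Arguments. Unset Strict Implicit. Unset Printing Implicit Defensive.
Import GRing.Theory.

Lemma dsize_le k n (D : diagram k n) : dsize D <= k * (n - k).
Proof.
have -> : k * (n - k) = \sum_(c < n - k) k by rewrite sum_nat_const card_ord mulnC.
by apply: leq_sum => c _; rewrite -ltnS ltn_ord.
Qed.

Lemma diag_lt_irr k n (D : diagram k n) : diag_lt D D = false.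
Proof. by apply/negbTE/existsP => -[c /andP [_]]; rewrite ltnn. Qed.


End MP11.
Import MP11.

Unset Implicit Arguments. Set Strict Implicit. Set Printing Implicit Defensive.

Theorem theorem8 (F : finFieldType) (idx : F -> 'I_#|F|) (Hidx : bijective idx)
  (n k : nat) (Hk : 0 < k) (Hkn : k < n) (X : 'M[F]_n)
  (HX : X \in Grass F k n) :
  let q := #|F| in
  let m := dsize (diag_of k X) in
  Ind idx k X =
    \sum_(m.+1 <= i < (k * (n - k)).+1) npart k (n - k) i * q ^ i
    + ind_m m (diag_of k X) * q ^ m + entval idx k X.
Proof.
move=> q m; have Hkn' : k <= n by apply: ltnW.
have [HAX _] := RE_spec HX.
set AX := RE k X in HAX.
set DX := diag_of k X.
have EDX : DX = dgA AX by [].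
have EvX : entval idx k X = evA idx AX by [].
rewrite EvX; rewrite /m EDX; clear m.
set m := dsize (dgA AX).
set vX := evA idx AX.
set DA := dgA AX.
pose ltA (A : 'M[F]_(k, n)) :=
  (m < dsize (dgA A)) || ((dsize (dgA A) == m) &&
     (diag_lt (dgA A) DA || ((dgA A == DA) && (evA idx A < vX)))).
transitivity #|[set A : 'M[F]_(k, n) | is_rre A && ltA A]|.
  exact: (card_Grass_RE ltA).
rewrite card_set_sum.
rewrite (partition_big (dgA (F:=F) (k:=k) (n:=n)) predT) //=.
pose inner (D : diagram k n) :=
  (m < dsize D) * q ^ dsize D + ((dsize D == m) && diag_lt D DA) * q ^ m + (D == DA) * vX.
have HDA : is_ferrers DA by apply: ferrers_dgA.
rewrite (eq_bigr (fun D => if is_ferrers D then inner D else 0)); last first.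
  move=> D _; case: ifP => HD; last first.
    apply: big1 => A /eqP EA; case HA: (is_rre A) => //=.
    by rewrite -EA ferrers_dgA in HD.
  transitivity (\sum_(A | dgA A == D) ((is_rre A && ltA A) * 1)).
    by apply: eq_bigr => A _; rewrite muln1.
  rewrite sum_bool_mul muln1.
  pose Lv v := (m < dsize D) || ((dsize D == m) && (diag_lt D DA || ((D == DA) && (v < vX)))).
  have -> : [set A : 'M[F]_(k, n) | (dgA A == D) && (is_rre A && ltA A)] =
            [set A | (is_rre A && (dgA A == D)) && Lv (evA idx A)].
    apply/setP => A; rewrite !inE /ltA /Lv.
    by case: (eqVneq (dgA A) D) => [->|]; rewrite ?andbF //= andbT.
  rewrite /inner /Lv.
  case H1: (m < dsize D).
    have -> : (dsize D == m) = false by apply/negbTE; rewrite neq_ltn H1 orbT.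
    have -> : (D == DA) = false.
      by apply/negbTE; apply: contraTneq H1 => ->; rewrite ltnn.
    rewrite !mul0n !addn0 mul1n -(card_SD F Hkn' HD); apply: eq_card => A.
    by rewrite !inE orTb andbT.
  case H2: ((dsize D == m) && diag_lt D DA).
    have -> : (D == DA) = false.
      by apply/negbTE; apply: contraTneq H2 => ->; rewrite diag_lt_irr andbF.
    move/andP: H2 => [/eqP Em Hlt].
    rewrite !mul0n add0n addn0 mul1n -Em -(card_SD F Hkn' HD); apply: eq_card => A.
    by rewrite !inE Em eqxx Hlt /= andbT.
  case H3: (D == DA).
    move/eqP: H3 => ED; subst D.
    rewrite !mul0n !add0n mul1n diag_lt_irr eqxx /=.
    apply: count_ev_lt => //.
    by apply: ltnW; apply: (SD_ev_lt idx HDA HAX).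
  rewrite !mul0n !add0n; apply/eqP; rewrite cards_eq0; apply/eqP/setP => A.
  by rewrite !inE andFb orbF H2 andbF.
rewrite -big_mkcond /= /inner !big_split /=.
have T3 : \sum_(D : diagram k n | is_ferrers D) (D == DA) * vX = vX.
  rewrite (bigD1 DA) //= eqxx mul1n big1 ?addn0 // => D /andP [_ ne].
  by rewrite (negbTE ne).
have T2 : \sum_(D : diagram k n | is_ferrers D) ((dsize D == m) && diag_lt D DA) * q ^ m = ind_m m DA * q ^ m.
  by rewrite sum_bool_mul.
have T1 : \sum_(D : diagram k n | is_ferrers D) (m < dsize D) * q ^ dsize D =
          \sum_(m.+1 <= i < (k * (n - k)).+1) npart k (n - k) i * q ^ i.
  transitivity (\sum_(m.+1 <= i < (k * (n - k)).+1) \sum_(D : diagram k n | is_ferrers D) ((dsize D == i) * q ^ i)).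
    rewrite exchange_big /=; apply: eq_bigr => D _.
    transitivity (\sum_(m.+1 <= i < (k * (n - k)).+1) ((dsize D == i) * q ^ dsize D)).
      by rewrite sum_range_eq ltnS dsize_le andbT.
    by apply: eq_bigr => i _; case: eqP => [->|].
  by apply: eq_bigr => i _; rewrite sum_bool_mul npart_ferrers.
by rewrite T1 T2 T3.
Qed.
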